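(* Let $K$ be a field, $V$ a vector space over $K$, and $f_L,f_R,g_L,g_R:V\to V$ linear maps. The algebra $A(f_L,f_R,g_L,g_R)$ is associative if and only if $$f_L\circ g_L=g_L\circ f_L=0,\quad f_R\circ g_R=g_R\circ f_R=0,\quad g_R\circ f_L=g_L\circ f_R,\quad f_R\circ g_L=f_L\circ g_R.$$
   Context: Let $V'$ be a second copy of $V$, identified with $V$ via a linear bijection $v\mapsto v'$. The algebra $A(f_L,f_R,g_L,g_R)$ is the vector space $Ke\oplus Ka\oplus V\oplus V'$ (with $e,a$ two new basis elements) with bilinear multiplication determined by $e^2=e$, $a^2=0$, $av=f_L(v)'$, $va=f_R(v)'$, $av'=g_L(v)$, $v'a=g_R(v)$ for $v\in V$, and all other products among $e$, $a$, elements of $V$ and elements of $V'$ equal to zero (in particular $ea=ae=0$, $ev=ve=ev'=v'e=0$, and $VV=VV'=V'V=V'V'=0$). *)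

(* Defs.v *)
From HB Require Import structures.
From mathcomp Require Import all_boot all_order all_algebra.
Set Implicit Arguments. Unset Strict Implicit. Unset Printing Implicit Defensive.
Import GRing.Theory.
Local Open Scope ring_scope.

(* Elements of A(f_L,f_R,g_L,g_R) = K e (+) K a (+) V (+) V':
   an element is  ce * e + ca * a + cv + (cv')'  . *)
Record Aelt (K : fieldType) (V : lmodType K) := MkA {
  ce : K; ca : K; cv : V; cv' : V }.

(* The bilinear multiplication determined by
   e^2=e, a^2=0, a v = f_L(v)', v a = f_R(v)', a v' = g_L(v), v' a = g_R(v),
   all other products of basis pieces zero. *)
Definition mulA (K : fieldType) (V : lmodType K) (fL fR gL gR : V -> V)
  (x y : Aelt V) : Aelt V :=
  MkA (ce x * ce y) 0
      (ca x *: gL (cv' y) + ca y *: gR (cv' x))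
      (ca x *: fL (cv y) + ca y *: fR (cv x)).

Definition associativeA (K : fieldType) (V : lmodType K) (fL fR gL gR : V -> V) :=
  forall x y z : Aelt V,
    mulA fL fR gL gR (mulA fL fR gL gR x y) z = mulA fL fR gL gR x (mulA fL fR gL gR y z).

(* Main.v *)
Require Import Defs.
From HB Require Import structures.
From mathcomp Require Import all_boot all_order all_algebra.
Local Open Scope ring_scope.
Import GRing.Theory.

Theorem mainTheorem3 (K : fieldType) (V : lmodType K)
  (fL fR gL gR : {linear V -> V}) :
  associativeA fL fR gL gR <->
  [/\ (forall v, fL (gL v) = 0) /\ (forall v, gL (fL v) = 0),
      (forall v, fR (gR v) = 0) /\ (forall v, gR (fR v) = 0),
      (forall v, gR (fL v) = gL (fR v))
    & (forall v, fR (gL v) = fL (gR v))].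
Proof.
split.
- move=> H.
  have E := fun x y z => congr1 (@cv _ _) (H x y z).
  have E' := fun x y z => congr1 (@cv' _ _) (H x y z).
  have Ha : forall v, MkA 0 1 v 0 = MkA 0 1 v 0 by [].
  split; [split|split| |] => v.
  + move: (E' (MkA 0 1 0 0) (MkA 0 1 0 0) (MkA 0 0 0 v)) => /=.
    by rewrite ?linear0 ?scale0r ?scaler0 ?addr0 ?add0r ?linearD ?linearZ /= ?linear0 ?scaler0 ?scale1r ?scale0r ?addr0 ?add0r ?linear0 ?scaler0 ?addr0 ?add0r => ->.
  + move: (E (MkA 0 1 0 0) (MkA 0 1 0 0) (MkA 0 0 v 0)) => /=.
    by rewrite ?linear0 ?scale0r ?scaler0 ?addr0 ?add0r ?linearD ?linearZ /= ?linear0 ?scaler0 ?scale1r ?scale0r ?addr0 ?add0r ?linear0 ?scaler0 ?addr0 ?add0r => ->.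
  + move: (E' (MkA 0 0 0 v) (MkA 0 1 0 0) (MkA 0 1 0 0)) => /=.
    by rewrite ?linear0 ?scale0r ?scaler0 ?addr0 ?add0r ?linearD ?linearZ /= ?linear0 ?scaler0 ?scale1r ?scale0r ?addr0 ?add0r ?linear0 ?scaler0 ?addr0 ?add0r => ->.
  + move: (E (MkA 0 0 v 0) (MkA 0 1 0 0) (MkA 0 1 0 0)) => /=.
    by rewrite ?linear0 ?scale0r ?scaler0 ?addr0 ?add0r ?linearD ?linearZ /= ?linear0 ?scaler0 ?scale1r ?scale0r ?addr0 ?add0r ?linear0 ?scaler0 ?addr0 ?add0r => ->.
  + move: (E (MkA 0 1 0 0) (MkA 0 0 v 0) (MkA 0 1 0 0)) => /=.
    by rewrite ?linear0 ?scale0r ?scaler0 ?addr0 ?add0r ?linearD ?linearZ /= ?linear0 ?scaler0 ?scale1r ?scale0r ?addr0 ?add0r ?linear0 ?scaler0 ?addr0 ?add0r => ->.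
  + move: (E' (MkA 0 1 0 0) (MkA 0 0 0 v) (MkA 0 1 0 0)) => /=.
    by rewrite ?linear0 ?scale0r ?scaler0 ?addr0 ?add0r ?linearD ?linearZ /= ?linear0 ?scaler0 ?scale1r ?scale0r ?addr0 ?add0r ?linear0 ?scaler0 ?addr0 ?add0r => ->.
- case=> [[h1 h2] [h3 h4] h5 h6] [a1 a2 a3 a4] [b1 b2 b3 b4] [c1 c2 c3 c4].
  rewrite /Defs.mulA /=.
  rewrite ?linearD ?linearZ /= ?h1 ?h2 ?h3 ?h4 ?h5 ?h6 ?scaler0 ?addr0 ?add0r !scale0r ?addr0 ?add0r !scalerA mulrA [c2 * a2]mulrC.
  by [].
Qed.
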